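(* For any $X$-free ordered graph $(H,\prec)$, the graph $H$ contains no subdivision of $B_4$ as an induced subgraph.
   Context: An ordered graph is a pair $(H,\prec)$ with $H$ a finite graph and $\prec$ a linear order on $V(H)$. $X$ denotes the ordered graph on vertices $a\prec b\prec c\prec d$ with edge set exactly $\{ac,bd\}$; an ordered graph is $X$-free if no four of its vertices induce (with the restricted order) a copy of $X$. $B_4$ is the graph on vertices $s,t,x_1,x_2,x_3,y_1,y_2,y_3,z_1,z_2,z_3$ formed by the three internally disjoint paths $s x_1 x_2 x_3 t$, $s y_1 y_2 y_3 t$, $s z_1 z_2 z_3 t$ (each with $4$ edges) and no other edges. A subdivision of a graph $F$ is a graph obtained from $F$ by replacing edges of $F$ with internally disjoint paths between their ends. *)

(* Defs.v *)
From mathcomp Require Import all_boot.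
Set Implicit Arguments. Unset Strict Implicit. Unset Printing Implicit Defensive.

Definition simple_graph (T : finType) (e : rel T) : Prop :=
  symmetric e /\ irreflexive e.

Definition strict_linear_order (T : finType) (lt : rel T) : Prop :=
  [/\ irreflexive lt, transitive lt & forall x y, x != y -> lt x y || lt y x].

Definition X_free (T : finType) (e : rel T) (lt : rel T) : Prop :=
  ~ exists a b c d : T,
      [&& lt a b, lt b c, lt c d, e a c, e b d,
          ~~ e a b, ~~ e a d, ~~ e b c & ~~ e c d].

Definition consec (T : eqType) (s : seq T) (x y : T) : Prop :=
  exists i, i.+1 < size s /\ nth x s i = x /\ nth x s i.+1 = y.

(* The vertex x of H lies in the subdivision given by branch map phi and
   internal-vertex lists Q (Q u v = internal vertices of the path replacing uv). *)
Definition in_subdiv (V T : finType) (fe : rel V) (phi : V -> T)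
  (Q : V -> V -> seq T) (x : T) : Prop :=
  (exists w, x = phi w) \/ (exists u v, fe u v /\ x \in Q u v).

Definition induced_subdivision (V : finType) (fe : rel V)
  (T : finType) (e : rel T) : Prop :=
  exists (phi : V -> T) (Q : V -> V -> seq T),
  [/\ injective phi,
      (forall u v, fe u v -> Q v u = rev (Q u v)),
      (forall u v, fe u v ->
         [/\ path e (phi u) (rcons (Q u v) (phi v)),
             uniq (phi u :: rcons (Q u v) (phi v)) &
             forall x w, x \in Q u v -> x != phi w]),
      (forall u v u' v', fe u v -> fe u' v' -> forall x,
          x \in Q u v -> x \in Q u' v' ->
          (u' = u /\ v' = v) \/ (u' = v /\ v' = u)) &
      (forall x y, in_subdiv fe phi Q x -> in_subdiv fe phi Q y -> e x y ->
          exists u v, fe u v /\ consec (phi u :: rcons (Q u v) (phi v)) x y)].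

(* B_4 on 'I_11: s = 0, t = 1, x1 x2 x3 = 2 3 4, y1 y2 y3 = 5 6 7,
   z1 z2 z3 = 8 9 10; paths s x1 x2 x3 t, s y1 y2 y3 t, s z1 z2 z3 t. *)
Definition B4_edges : seq (nat * nat) :=
  [:: (0,2); (2,3); (3,4); (4,1);
      (0,5); (5,6); (6,7); (7,1);
      (0,8); (8,9); (9,10); (10,1)].

Definition B4_adj : rel 'I_11 :=
  fun i j => (((i : nat), (j : nat)) \in B4_edges) || (((j : nat), (i : nat)) \in B4_edges).

(* Main.v *)
Require Import Defs.
From mathcomp Require Import all_boot zify.
From Stdlib Require Import Classical.
Set Implicit Arguments. Unset Strict Implicit. Unset Printing Implicit Defensive.

Section Gen.
Variable T : finType.
Variables e lt : rel T.
Hypothesis esym : symmetric e.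
Hypothesis eirr : irreflexive e.
Hypothesis ltirr : irreflexive lt.
Hypothesis lttr : transitive lt.
Hypothesis lttot : forall x y, x != y -> lt x y || lt y x.
Hypothesis Xf : X_free e lt.
Variable inV : T -> Prop.

Definition btw x w y := (lt x w && lt w y) || (lt y w && lt w x).
Definition far x y w := [/\ inV w, w <> x, w <> y, ~~ e x w & ~~ e y w].
Definition InE x y := exists w, far x y w /\ btw x w y.

Lemma btwC x w y : btw x w y = btw y w x.
Proof. by rewrite /btw orbC. Qed.

Lemma farC x y w : far x y w <-> far y x w.
Proof. by split; case=> *; split. Qed.

Lemma InEC x y : InE x y <-> InE y x.
Proof. by split; case=> w [/farC h1 h2]; exists w; split=> //; rewrite btwC. Qed.

Lemma lt_asym x y : lt x y -> lt y x -> False.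
Proof. move=> h1 h2; have := lttr h1 h2; by rewrite ltirr. Qed.

Lemma lt_neq x y : lt x y -> x <> y.
Proof. by move=> h E; subst; rewrite ltirr in h. Qed.

Lemma lt_total x y : x <> y -> lt x y \/ lt y x.
Proof. move=> /eqP/lttot; case/orP; auto. Qed.

Lemma mkX a b c d : lt a b -> lt b c -> lt c d -> e a c -> e b d ->
  ~~ e a b -> ~~ e a d -> ~~ e b c -> ~~ e c d -> False.
Proof.
move=> h1 h2 h3 h4 h5 h6 h7 h8 h9; apply: Xf; exists a, b, c, d.
by rewrite h1 h2 h3 h4 h5 h6 h7 h8 h9.
Qed.

Lemma L0_aux x y u v : lt x y -> e x y -> e u v -> far x y u -> far x y v ->
  btw x u y -> btw x v y.
Proof.
move=> lxy exy euv [_ ux uy exu eyu] [_ vx vy exv eyv].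
rewrite {1}/btw => /orP [/andP [xu uy'] | /andP [yu0 ux0]]; last first.
  by case: (lt_asym lxy (lttr yu0 ux0)).
have uv : u <> v by move=> E; subst; rewrite eirr in euv.
apply/negPn/negP; rewrite negb_or => /andP [h1 h2].
case: (lt_total vx) => [vlx | xlv].
- apply: (mkX vlx xu uy' _ exy) => //; try by rewrite esym.
- have ylv : lt y v.
    case: (lt_total (nesym vy)) => // vly.
    by move: h1; rewrite xlv vly.
  apply: (mkX xu uy' ylv exy euv) => //; by rewrite esym.
Qed.

Lemma L0 x y u v : e x y -> e u v -> far x y u -> far x y v ->
  btw x u y -> btw x v y.
Proof.
move=> exy euv fu fv.
have xy : x <> y by move=> E; subst; rewrite eirr in exy.
case: (lt_total xy) => h; first exact: L0_aux.
rewrite btwC (btwC x v y); apply: L0_aux => //; first by rewrite esym.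
- by apply/farC.
- by apply/farC.
Qed.

Lemma L0iff x y u v : e x y -> e u v -> far x y u -> far x y v ->
  btw x u y = btw x v y.
Proof.
move=> exy euv fu fv; apply/idP/idP; first exact: L0.
by apply: L0 => //; rewrite esym.
Qed.

Lemma segment (f : nat -> T) x y k1 d : e x y ->
  (forall j, k1 <= j < k1 + d -> e (f j) (f j.+1)) ->
  (forall j, k1 <= j <= k1 + d -> far x y (f j)) ->
  btw x (f k1) y = btw x (f (k1 + d)) y.
Proof.
move=> exy; elim: d => [|d IH] hp hf; first by rewrite addn0.
rewrite IH; last 2 first.
- move=> j /andP [h1 h2]; apply: hp; rewrite h1 /=; lia.
- move=> j /andP [h1 h2]; apply: hf; rewrite h1 /=; lia.
rewrite addnS; apply: L0iff => //.
- apply: hp; lia.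
- apply: hf; lia.
- apply: hf; lia.
Qed.

Lemma ivt_aux (l : rel T) (f : nat -> T) r k1 d :
  (forall a b, a <> b -> l a b \/ l b a) ->
  (forall a b, l a b -> l b a -> False) ->
  (forall j, k1 <= j <= k1 + d -> f j <> r) ->
  l (f k1) r -> l r (f (k1 + d)) ->
  exists j, k1 <= j < k1 + d /\ l (f j) r /\ l r (f j.+1).
Proof.
move=> tot asy; elim: d => [|d IH] hne h1 h2.
  by rewrite addn0 in h2; case: (asy _ _ h1 h2).
have hd : f (k1 + d) <> r by apply: hne; lia.
case: (tot _ _ hd) => [h|h].
- exists (k1 + d); split; first lia. by rewrite -addnS.
- case: IH => //. move=> j hj; apply: hne; lia.
  move=> j [hj hh]; exists j; split=> //; lia.
Qed.

Lemma ivt (f : nat -> T) r k1 d :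
  (forall j, k1 <= j <= k1 + d -> f j <> r) ->
  btw (f k1) r (f (k1 + d)) ->
  exists j, k1 <= j < k1 + d /\ btw (f j) r (f j.+1).
Proof.
move=> hne; case/orP => /andP [h1 h2].
- case: (ivt_aux (l:=lt) (f:=f) (r:=r) (k1:=k1) (d:=d)) => //.
  + exact: lt_total.
  + exact: lt_asym.
  + move=> j [hj [a b]]; exists j; split=> //; by rewrite /btw a b.
- case: (ivt_aux (l:=fun a b => lt b a) (f:=f) (r:=r) (k1:=k1) (d:=d)) => //.
  + move=> a b /lt_total; tauto.
  + move=> a b h h'; exact: lt_asym h h'.
  + move=> j [hj [a b]]; exists j; split=> //; by rewrite /btw a b orbT.
Qed.

End Gen.

Section Gen2.
Variable T : finType.
Variables e lt : rel T.
Hypothesis esym : symmetric e.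
Hypothesis eirr : irreflexive e.
Hypothesis ltirr : irreflexive lt.
Hypothesis lttr : transitive lt.
Hypothesis lttot : forall x y, x != y -> lt x y || lt y x.
Hypothesis Xf : X_free e lt.
Variable inV : T -> Prop.

Notation btw := (btw lt).
Notation far := (far e inV).
Notation InE := (InE e lt inV).

Definition SideConst x y := forall w w', far x y w -> far x y w' -> btw x w y = btw x w' y.

Lemma btw3 x y u v : btw x u y -> btw x v y -> btw u x v -> False.
Proof.
have A := lt_asym ltirr lttr.
have tr : forall x y z, lt x y -> lt y z -> lt x z by move=> ? ? ?; apply: lttr.
rewrite /btw.
case/orP=> /andP [h1 h2]; case/orP=> /andP [h3 h4]; case/orP=> /andP [h5 h6].
all: first [ exact: A h1 h5 | exact: A h3 h5 | exact: A h6 h4 | exact: A h6 h2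
  | exact: A h5 h1 | exact: A h5 h3 | exact: A h4 h6 | exact: A h2 h6
  | exact: A (tr _ _ _ h1 h2) (tr _ _ _ h3 h4) ].
Qed.

Lemma F1 x y u v : SideConst x y -> SideConst u v -> InE x y -> InE u v ->
  far x y u -> far x y v -> far u v x -> far u v y -> False.
Proof.
move=> S1 S2 [w [fw bw]] [w' [fw' bw']] fu fv fx fy.
apply: (@btw3 x y u v).
- by rewrite (S1 u w).
- by rewrite (S1 v w).
- by rewrite (S2 x w').
Qed.

Lemma Block a c a' c' : a <> a' -> a <> c' -> c <> a' -> c <> c' ->
  ~~ btw a' a c' -> ~~ btw a c' c -> ~~ btw a a' c ->
  lt a a' -> lt a c' /\ lt c a'.
Proof.
move=> h1 h2 h3 h4 b1 b2 b3 aa.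
have A := lt_asym ltirr lttr.
split.
- case: (lt_total lttot h2) => // c'a.
  by move: b1; rewrite /btw c'a aa orbT.
- case: (lt_total lttot h3) => // a'c.
  by move: b3; rewrite /btw aa a'c.
Qed.

Lemma notIn_btw x y w : ~ InE x y -> far x y w -> ~~ btw x w y.
Proof. by move=> nI fw; apply/negP => b; apply: nI; exists w. Qed.

Lemma Spider z (a c : nat -> T) :
  (forall p q, p < 3 -> q < 3 -> p <> q ->
     [/\ far (a q) (c q) (a p), far (a q) (c q) (c p) & far z (a p) (c q)]) ->
  exists m, m < 3 /\ (InE z (a m) \/ InE (a m) (c m)).
Proof.
move=> H.
apply: NNPP => nH.
have O1 : forall m, m < 3 -> ~ InE z (a m).
  by move=> m hm hI; apply: nH; exists m; split=> //; left.
have O2 : forall m, m < 3 -> ~ InE (a m) (c m).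
  by move=> m hm hI; apply: nH; exists m; split=> //; right.
have mid : forall p q r, p < 3 -> q < 3 -> r < 3 -> p <> q -> q <> r -> p <> r ->
    lt (a p) (a q) -> lt (a q) (a r) -> False.
  move=> p q r hp hq hr pq qr pr l1 l2.
  have [f1 f2 f3] := H p q hp hq pq.
  have [g1 g2 g3] := H q p hq hp (nesym pq).
  have [f1' f2' f3'] := H q r hq hr qr.
  have [g1' g2' g3'] := H r q hr hq (nesym qr).
  have [lpq _] : lt (a p) (c q) /\ lt (c p) (a q).
    apply: Block.
    - by case: f1.
    - by case: f1.
    - by case: f2.
    - by case: f2.
    - exact: notIn_btw (O2 _ hq) f1.
    - exact: notIn_btw (O2 _ hp) g2.
    - exact: notIn_btw (O2 _ hp) g1.
    - exact: l1.
  have [_ lqr] : lt (a q) (c r) /\ lt (c q) (a r).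
    apply: Block.
    - by case: f1'.
    - by case: f1'.
    - by case: f2'.
    - by case: f2'.
    - exact: notIn_btw (O2 _ hr) f1'.
    - exact: notIn_btw (O2 _ hq) g2'.
    - exact: notIn_btw (O2 _ hq) g1'.
    - exact: l2.
  have zc : z <> c q by case: f3 => _ ? _ _ _; apply/nesym.
  case: (lt_total lttot zc) => h.
  - apply: (O1 _ hr); exists (c q); split=> //.
    by apply/orP; left; apply/andP.
  - apply: (O1 _ hp); exists (c q); split=> //.
    by apply/orP; right; apply/andP.
have tr : forall x y z, lt x y -> lt y z -> lt x z by move=> ? ? ?; apply: lttr.
have d : forall p q, p < 3 -> q < 3 -> p <> q -> a p <> a q.
  by move=> p q hp hq pq; case: (H p q hp hq pq) => [[_ ? _ _ _] _ _].
have t01 := lt_total lttot (d 0 1 erefl erefl ltac:(done)).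
have t02 := lt_total lttot (d 0 2 erefl erefl ltac:(done)).
have t12 := lt_total lttot (d 1 2 erefl erefl ltac:(done)).
case: t01 => h01; case: t02 => h02; case: t12 => h12.
all: first [ exact: (mid 0 1 2) | exact: (mid 0 2 1) | exact: (mid 1 0 2)
           | exact: (mid 1 2 0) | exact: (mid 2 0 1) | exact: (mid 2 1 0)
           | exact: lt_asym ltirr lttr (tr _ _ _ h01 h12) h02
           | exact: lt_asym ltirr lttr (tr _ _ _ h12 h01) h02 ].
Qed.

End Gen2.

Ltac dm := repeat match goal with
 | H : is_true (?m < 3) |- _ => is_var m; destruct m as [|[|[|?m]]];
     [ | | | exfalso; clear -H; lia]
 end.

Record ThetaH (T : finType) (e lt : rel T) (pos : nat -> nat -> T) (n : nat -> nat) : Prop := {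
  th_esym : symmetric e;
  th_eirr : irreflexive e;
  th_ltirr : irreflexive lt;
  th_lttr : transitive lt;
  th_lttot : forall x y, x != y -> lt x y || lt y x;
  th_Xf : X_free e lt;
  th_Hs : forall m, m < 3 -> pos m 0 = pos 0 0;
  th_Ht : forall m, m < 3 -> pos m (n m) = pos 0 (n 0);
  th_Hpath : forall m k, m < 3 -> k < n m -> e (pos m k) (pos m k.+1);
  th_Hinj : forall m m' k k', m < 3 -> m' < 3 -> k <= n m -> k' <= n m' ->
    pos m k = pos m' k' -> (m = m' /\ k = k') \/ (k = 0 /\ k' = 0) \/ (k = n m /\ k' = n m');
  th_Hind : forall m m' k k', m < 3 -> m' < 3 -> k <= n m -> k' <= n m' ->
    e (pos m k) (pos m' k') -> exists i j, i < 3 /\ j < n i /\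
     ((pos m k = pos i j /\ pos m' k' = pos i j.+1) \/ (pos m k = pos i j.+1 /\ pos m' k' = pos i j));
  th_Hlen : forall m, m < 3 -> 4 <= n m }.

Section Theta.
Variable T : finType.
Variables e lt : rel T.
Variable pos : nat -> nat -> T.
Variable n : nat -> nat.
Variable HH : ThetaH e lt pos n.
Let esym := th_esym HH.
Let eirr := th_eirr HH.
Let ltirr := th_ltirr HH.
Let lttr := th_lttr HH.
Let lttot := th_lttot HH.
Let Xf := th_Xf HH.
Let Hs := th_Hs HH.
Let Ht := th_Ht HH.
Let Hpath := th_Hpath HH.
Let Hinj := th_Hinj HH.
Let Hind := th_Hind HH.
Let Hlen := th_Hlen HH.

Definition inV x := exists m k, m < 3 /\ k <= n m /\ x = pos m k.

Definition EQI m k m' k' := (m = m' /\ k = k') \/ (k = 0 /\ k' = 0) \/ (k = n m /\ k' = n m').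
Definition ADJI m k m' k' := (m = m' /\ (k' = k.+1 \/ k = k'.+1)) \/ (k = 0 /\ k' = 1) \/
  (k' = 0 /\ k = 1) \/ (k = n m /\ k'.+1 = n m') \/ (k' = n m' /\ k.+1 = n m).

Lemma eqP' m k m' k' : m < 3 -> m' < 3 -> k <= n m -> k' <= n m' ->
  pos m k = pos m' k' <-> EQI m k m' k'.
Proof.
move=> hm hm' hk hk'; split; first exact: Hinj.
case=> [[-> ->] //|[[-> ->]|[-> ->]]]; first by rewrite Hs // Hs.
by rewrite Ht // Ht.
Qed.

Lemma adjP m k m' k' : m < 3 -> m' < 3 -> k <= n m -> k' <= n m' ->
  e (pos m k) (pos m' k') <-> ADJI m k m' k'.
Proof.
move=> hm hm' hk hk'; split.
- move/Hind => /(_ hm hm' hk hk') [i [j [hi [hj H]]]].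
  have hl0 := @Hlen 0 erefl. have hl1 := @Hlen 1 erefl. have hl2 := @Hlen 2 erefl.
  case: H => [[/eqP' E1 /eqP' E2]|[/eqP' E1 /eqP' E2]].
  + have {E1} := E1 hm hi hk (ltnW hj). have {E2} := E2 hm' hi hk' hj.
    rewrite /EQI /ADJI; dm; lia.
  + have {E1} := E1 hm hi hk hj. have {E2} := E2 hm' hi hk' (ltnW hj).
    rewrite /EQI /ADJI; dm; lia.
- have hl0 := Hlen hm. have hl1 := Hlen hm'.
  case=> [[E1 [E2|E2]]|[[E1 E2]|[[E1 E2]|[[E1 E2]|[E1 E2]]]]]; subst.
  + apply: Hpath => //; lia.
  + rewrite esym; apply: Hpath => //; lia.
  + rewrite Hs // -(Hs hm'); apply: Hpath => //; lia.
  + rewrite esym Hs // -(Hs hm); apply: Hpath => //; lia.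
  + rewrite Ht // -(Ht hm') -E2 esym; apply: Hpath => //; lia.
  + rewrite Ht // -(Ht hm) -E2; apply: Hpath => //; lia.
Qed.

Notation far := (far e inV).
Notation btw := (btw lt).
Notation InE := (InE e lt inV).

Lemma inV_pos m k : m < 3 -> k <= n m -> inV (pos m k).
Proof. by move=> hm hk; exists m, k. Qed.

Lemma farP i1 k1 i2 k2 m k : i1 < 3 -> i2 < 3 -> m < 3 ->
  k1 <= n i1 -> k2 <= n i2 -> k <= n m ->
  far (pos i1 k1) (pos i2 k2) (pos m k) <->
  (~ EQI m k i1 k1 /\ ~ EQI m k i2 k2 /\ ~ ADJI i1 k1 m k /\ ~ ADJI i2 k2 m k).
Proof.
move=> h1 h2 hm hk1 hk2 hk; split.
- case=> _ n1 n2 a1 a2; split; first by move/eqP'=> /(_ hm h1 hk hk1).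
  split; first by move/eqP'=> /(_ hm h2 hk hk2).
  split; first by move/adjP=> /(_ h1 hm hk1 hk) H; move/negP: a1.
  by move/adjP=> /(_ h2 hm hk2 hk) H; move/negP: a2.
- case=> n1 [n2 [a1 a2]]; split.
  + exact: inV_pos.
  + by move/eqP' => /(_ hm h1 hk hk1).
  + by move/eqP' => /(_ hm h2 hk hk2).
  + by apply/negP => /adjP => /(_ h1 hm hk1 hk).
  + by apply/negP => /adjP => /(_ h2 hm hk2 hk).
Qed.

Ltac lenfacts := have := @Hlen 0 erefl; have := @Hlen 1 erefl; have := @Hlen 2 erefl.

Lemma eq_same i j j' : i < 3 -> j <= n i -> j' <= n i -> (pos i j = pos i j' <-> j = j').
Proof.
move=> hi hj hj'; split; last by move->.
by move/eqP' => /(_ hi hi hj hj'); rewrite /EQI; lia.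
Qed.

Lemma adj_same i j j' : i < 3 -> j <= n i -> j' <= n i ->
  (e (pos i j) (pos i j') <-> (j' = j.+1 \/ j = j'.+1)).
Proof.
move=> hi hj hj'; rewrite adjP // /ADJI; lia.
Qed.

Lemma eq_diff m j i j' : m < 3 -> i < 3 -> m <> i -> j <= n m -> j' <= n i ->
  (pos m j = pos i j' <-> (j = 0 /\ j' = 0) \/ (j = n m /\ j' = n i)).
Proof.
move=> hm hi mi hj hj'; rewrite eqP' // /EQI; split; first by case=> [[]|]//.
by move=> H; right.
Qed.

Lemma adj_diff i j' m j : m < 3 -> i < 3 -> m <> i -> j <= n m -> j' <= n i ->
  (e (pos i j') (pos m j) <->
   (j' = 0 /\ j = 1) \/ (j = 0 /\ j' = 1) \/ (j' = n i /\ j.+1 = n m) \/ (j = n m /\ j'.+1 = n i)).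
Proof.
move=> hm hi mi hj hj'; rewrite adjP // /ADJI; split.
- case=> [[E _]|H]; first by case: mi. lia.
- lia.
Qed.

Definition FD m j i k0 := [/\ j = 0 -> 2 <= k0, j = 1 -> 1 <= k0, j = n m -> k0.+2 < n i
   & j.+1 = n m -> k0.+1 < n i].

Lemma far_same i k0 j : i < 3 -> k0 < n i -> j <= n i ->
  (far (pos i k0) (pos i k0.+1) (pos i j) <-> (j.+2 <= k0 \/ k0.+3 <= j)).
Proof.
move=> hi hk hj; split.
- case=> _ n1 n2 a1 a2.
  have h1 : j <> k0 by move=> E; apply: n1; rewrite E.
  have h2 : j <> k0.+1 by move=> E; apply: n2; rewrite E.
  have h3 : ~ (j = k0.+1 \/ k0 = j.+1) by move/(adj_same hi (ltnW hk) hj); apply/negP.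
  have h4 : ~ (j = k0.+2 \/ k0.+1 = j.+1) by move/(adj_same hi hk hj); apply/negP.
  lia.
- move=> H; split.
  + exact: inV_pos.
  + by move/(eq_same hi hj (ltnW hk)); lia.
  + by move/(eq_same hi hj hk); lia.
  + by apply/negP => /(adj_same hi (ltnW hk) hj); lia.
  + by apply/negP => /(adj_same hi hk hj); lia.
Qed.

Lemma far_diff i k0 m j : i < 3 -> m < 3 -> m <> i -> k0 < n i -> j <= n m ->
  (far (pos i k0) (pos i k0.+1) (pos m j) <-> FD m j i k0).
Proof.
move=> hi hm mi hk hj.
have l1 := Hlen hi. have l2 := Hlen hm.
split.
- case=> _ n1 n2 a1 a2.
  have h1 := fun E => n1 ((eq_diff hm hi mi hj (ltnW hk)).2 E).
  have h2 := fun E => n2 ((eq_diff hm hi mi hj hk).2 E).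
  have h3 := fun E => (negP a1) ((adj_diff hm hi mi hj (ltnW hk)).2 E).
  have h4 := fun E => (negP a2) ((adj_diff hm hi mi hj hk).2 E).
  rewrite /FD; split; lia.
- case=> f1 f2 f3 f4; split.
  + exact: inV_pos.
  + by move/(eq_diff hm hi mi hj (ltnW hk)); lia.
  + by move/(eq_diff hm hi mi hj hk); lia.
  + by apply/negP => /(adj_diff hm hi mi hj (ltnW hk)); lia.
  + by apply/negP => /(adj_diff hm hi mi hj hk); lia.
Qed.

End Theta.

Section Theta2.
Variable T : finType.
Variables e lt : rel T.
Variable pos : nat -> nat -> T.
Variable n : nat -> nat.
Variable HH : ThetaH e lt pos n.
Let esym := th_esym HH.
Let eirr := th_eirr HH.
Let ltirr := th_ltirr HH.
Let lttr := th_lttr HH.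
Let lttot := th_lttot HH.
Let Xf := th_Xf HH.
Let Hs := th_Hs HH.
Let Ht := th_Ht HH.
Let Hpath := th_Hpath HH.
Let Hlen := th_Hlen HH.
Notation inV := (inV pos n).
Notation far := (far e inV).
Notation btw := (btw lt).
Notation InE := (InE e lt inV).
Let seg := @segment T e lt esym eirr ltirr lttr lttot Xf inV.

Lemma seg2 f x y k1 k2 : e x y -> k1 <= k2 ->
  (forall j, k1 <= j < k2 -> e (f j) (f j.+1)) ->
  (forall j, k1 <= j <= k2 -> far x y (f j)) -> btw x (f k1) y = btw x (f k2) y.
Proof.
move=> exy hk h1 h2; have := @seg f x y k1 (k2 - k1) exy.
by rewrite subnKC //; apply.
Qed.

Lemma Side i k0 w : i < 3 -> k0 < n i -> far (pos i k0) (pos i k0.+1) w ->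
  btw (pos i k0) w (pos i k0.+1) =
  btw (pos i k0) (if k0.+2 < n i then pos 0 (n 0) else pos 0 0) (pos i k0.+1).
Proof.
move=> hi hk0 fw.
have exy : e (pos i k0) (pos i k0.+1) by apply: Hpath.
have [m [k [hm [hk Ew]]]] : inV w by case: fw.
subst w.
have hln := Hlen hm. have hli := Hlen hi.
case: (eqVneq m i) => [Emi|mi].
- subst m. have := (far_same HH hi hk0 hk).1 fw => FS.
  case: ifP => hc.
  + case: FS => FS.
    * rewrite -(@seg2 (pos i) _ _ 0 k) //.
      -- rewrite Hs // -(Hs (m:=if i == 0 then 1 else 0)); last by case: ifP.
         set m' := if i == 0 then 1 else 0.
         have hm' : m' < 3 by rewrite /m'; case: ifP.
         have mi : m' <> i by rewrite /m'; case: ifP => [/eqP ->|/negbT/eqP] //; apply: nesym.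
         have hln' := Hlen hm'.
         rewrite (@seg2 (pos m') _ _ 0 (n m')) //.
         ++ by rewrite Ht.
         ++ move=> j hj; apply: Hpath => //; lia.
         ++ move=> j hj; apply/(far_diff HH) => //; try lia.
            split; lia.
      -- move=> j hj; apply: Hpath => //; lia.
      -- move=> j hj; apply/(far_same HH) => //; lia.
    * rewrite (@seg2 (pos i) _ _ k (n i)) //.
      -- by rewrite Ht.
      -- move=> j hj; apply: Hpath => //; lia.
      -- move=> j hj; apply/(far_same HH) => //; lia.
  + case: FS => FS; last by exfalso; lia.
    rewrite -(@seg2 (pos i) _ _ 0 k) // ?Hs //.
    * move=> j hj; apply: Hpath => //; lia.
    * move=> j hj; apply/(far_same HH) => //; lia.
- have mi' : m <> i by apply/eqP.
  have := (far_diff HH hi hm mi' hk0 hk).1 fw => - [f1 f2 f3 f4].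
  case: ifP => hc.
  + rewrite (@seg2 (pos m) _ _ k (n m)) //.
    * by rewrite Ht.
    * move=> j hj; apply: Hpath => //; lia.
    * move=> j hj; apply/(far_diff HH) => //; try lia.
      split; lia.
  + rewrite -(@seg2 (pos m) _ _ 0 k) // ?Hs //.
    * move=> j hj; apply: Hpath => //; lia.
    * move=> j hj; apply/(far_diff HH) => //; try lia.
      split; lia.
Qed.

Lemma SideC i k0 : i < 3 -> k0 < n i -> SideConst e lt inV (pos i k0) (pos i k0.+1).
Proof.
move=> hi hk w w' fw fw'.
by rewrite (Side hi hk fw) (Side hi hk fw').
Qed.

Lemma SideConst_sym x y : SideConst e lt inV x y -> SideConst e lt inV y x.
Proof.
move=> S w w' fw fw'; rewrite btwC (btwC _ y w').
by apply: S; apply/farC.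
Qed.

End Theta2.

Section Theta3.
Variable T : finType.
Variables e lt : rel T.
Variable pos : nat -> nat -> T.
Variable n : nat -> nat.
Variable HH : ThetaH e lt pos n.
Let esym := th_esym HH.
Let eirr := th_eirr HH.
Let ltirr := th_ltirr HH.
Let lttr := th_lttr HH.
Let lttot := th_lttot HH.
Let Xf := th_Xf HH.
Let Hs := th_Hs HH.
Let Ht := th_Ht HH.
Let Hpath := th_Hpath HH.
Let Hlen := th_Hlen HH.
Notation inV := (inV pos n).
Notation far := (far e inV).
Notation btw := (btw lt).
Notation InE := (InE e lt inV).

Lemma ivt2 f r k1 k2 : k1 <= k2 -> (forall j, k1 <= j <= k2 -> f j <> r) ->
  btw (f k1) r (f k2) -> exists j, k1 <= j < k2 /\ btw (f j) r (f j.+1).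
Proof.
move=> hk h1 h2.
have := @ivt T lt ltirr lttr lttot inV f r k1 (k2 - k1).
rewrite subnKC //; by apply.
Qed.

Definition EOut i := forall q, q < n i -> ~ InE (pos i q) (pos i q.+1).

Lemma TB_aux j k : j < 3 -> k < 3 -> j <> k -> EOut j -> EOut k ->
  lt (pos j 1) (pos k 1) -> False.
Proof.
move=> hj hk jk Oj Ok ljk.
have lj := Hlen hj. have lk := Hlen hk.
have A := lt_asym ltirr lttr.
have kj : k <> j by apply: nesym.
have N1 : ~~ btw (pos j 1) (pos k 1) (pos j (n j).-1).
  apply/negP => B.
  case: (@ivt2 (pos j) (pos k 1) 1 (n j).-1) => //; first by lia.
    move=> q hq E. have hq1 : q <= n j by lia. have hq2 : 1 <= n k by lia.
    move: E => /(eq_diff HH hj hk jk hq1 hq2). lia.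
  move=> q [hq Bq]. apply: (Oj q); first lia.
  exists (pos k 1); split=> //.
  apply/(far_diff HH) => //; try lia. split; lia.
have N2 : ~~ btw (pos k 1) (pos j 1) (pos k (n k).-1).
  apply/negP => B.
  case: (@ivt2 (pos k) (pos j 1) 1 (n k).-1) => //; first by lia.
    move=> q hq E. have hq1 : q <= n k by lia. have hq2 : 1 <= n j by lia.
    move: E => /(eq_diff HH hk hj kj hq1 hq2). lia.
  move=> q [hq Bq]. apply: (Ok q); first lia.
  exists (pos j 1); split=> //.
  apply/(far_diff HH) => //; try lia. split; lia.
have dbk : pos j (n j).-1 <> pos k 1.
  have h1 : (n j).-1 <= n j by lia. have h2 : 1 <= n k by lia.
  by move/(eq_diff HH hj hk jk h1 h2); lia.
have dak : pos j 1 <> pos k (n k).-1.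
  have h1 : 1 <= n j by lia. have h2 : (n k).-1 <= n k by lia.
  by move/(eq_diff HH hj hk jk h1 h2); lia.
have l3 : lt (pos j (n j).-1) (pos k 1).
  case: (lt_total lttot dbk) => // h.
  by move: N1; rewrite /btw ljk h.
have l3' : lt (pos j 1) (pos k (n k).-1).
  case: (lt_total lttot dak) => // h.
  by move: N2; rewrite /btw ljk h orbT.
have l4 : lt (pos j (n j).-1) (pos k 0).
  have f4 : far (pos k 0) (pos k 1) (pos j (n j).-1).
    apply/(far_diff HH) => //; try lia. split; lia.
  have ne : pos j (n j).-1 <> pos k 0 by case: f4.
  case: (lt_total lttot ne) => // h.
  exfalso; apply: (Ok 0); first lia.
  exists (pos j (n j).-1); split=> //.
  by rewrite /btw h l3.
have l5 : lt (pos j 1) (pos k (n k)).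
  have f5 : far (pos k (n k).-1) (pos k (n k).-1.+1) (pos j 1).
    apply/(far_diff HH) => //; try lia. split; lia.
  have E : (n k).-1.+1 = n k by lia.
  rewrite E in f5.
  have ne : pos j 1 <> pos k (n k) by case: f5.
  case: (lt_total lttot ne) => // h.
  exfalso; apply: (Ok (n k).-1); first lia.
  exists (pos j 1); split; first by rewrite E.
  by rewrite E /btw h l3' orbT.
have st : pos j 0 <> pos j (n j).
  have h1 : 0 <= n j by lia. have h2 : n j <= n j by lia.
  by move/(eq_same HH hj h1 h2); lia.
case: (lt_total lttot st) => h.
- apply: (Oj (n j).-1); first lia.
  have E : (n j).-1.+1 = n j by lia.
  exists (pos j 0); rewrite E; split.
  + have := (far_same HH (i:=j) (k0:=(n j).-1) (j:=0) hj ltac:(lia) ltac:(lia)).2 ltac:(lia).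
    by rewrite E.
  + rewrite /btw. apply/orP; left; apply/andP; split => //.
    by rewrite Hs // -(Hs hk).
- apply: (Oj 0); first lia.
  exists (pos j (n j)); split.
  + apply/(far_same HH) => //; lia.
  + rewrite /btw. apply/orP; right; apply/andP; split => //.
    by rewrite Ht // -(Ht hk).
Qed.

Lemma TwoBlock j k : j < 3 -> k < 3 -> j <> k -> EOut j -> EOut k -> False.
Proof.
move=> hj hk jk Oj Ok.
have ne : pos j 1 <> pos k 1.
  have := Hlen hj; have := Hlen hk => l1 l2.
  have h1 : 1 <= n j by lia. have h2 : 1 <= n k by lia.
  by move/(eq_diff HH hj hk jk h1 h2); lia.
case: (lt_total lttot ne) => h.
- exact: (TB_aux hj hk jk Oj Ok h).
- exact: (TB_aux hk hj (nesym jk) Ok Oj h).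
Qed.

End Theta3.

Section Theta4.
Variable T : finType.
Variables e lt : rel T.
Variable pos : nat -> nat -> T.
Variable n : nat -> nat.
Variable HH : ThetaH e lt pos n.
Let esym := th_esym HH.
Let eirr := th_eirr HH.
Let ltirr := th_ltirr HH.
Let lttr := th_lttr HH.
Let lttot := th_lttot HH.
Let Xf := th_Xf HH.
Let Hs := th_Hs HH.
Let Ht := th_Ht HH.
Let Hpath := th_Hpath HH.
Let Hlen := th_Hlen HH.
Notation inV := (inV pos n).
Notation far := (far e inV).
Notation btw := (btw lt).
Notation InE := (InE e lt inV).

Lemma spider_s : exists m k, m < 3 /\ k <= 1 /\ InE (pos m k) (pos m k.+1).
Proof.
have := @Spider T e lt ltirr lttr lttot inV (pos 0 0) (fun m => pos m 1) (fun m => pos m 2).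
case.
- move=> p q hp hq pq /=.
  have lp := Hlen hp; have lq := Hlen hq.
  split.
  + apply/(far_diff HH) => //; try lia. split; lia.
  + apply/(far_diff HH) => //; try lia. split; lia.
  + rewrite -(Hs hp). apply/(far_diff HH) => //; try lia.
    split; lia.
- move=> m [hm [H|H]].
  + by exists m, 0; split=> //; rewrite Hs.
  + by exists m, 1.
Qed.

Lemma spider_t : exists m k, m < 3 /\ (n m).-2 <= k < n m /\ InE (pos m k) (pos m k.+1).
Proof.
have := @Spider T e lt ltirr lttr lttot inV (pos 0 (n 0)) (fun m => pos m (n m).-1)
   (fun m => pos m (n m).-2).
case.
- move=> p q hp hq pq /=.
  have lp := Hlen hp; have lq := Hlen hq.
  have Eq : (n q).-1 = (n q).-2.+1 by lia.
  have Ep : (n p).-1 = (n p).-2.+1 by lia.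
  split.
  + apply/farC; rewrite Eq. apply/(far_diff HH) => //; try lia. split; lia.
  + apply/farC; rewrite Eq. apply/(far_diff HH) => //; try lia. split; lia.
  + rewrite -(Ht hp) Ep; apply/farC.
    have -> : pos p (n p) = pos p (n p).-2.+1.+1 by congr pos; lia.
    apply/(far_diff HH) => //; try lia.
    split; lia.
- move=> m [hm H].
  have lm := Hlen hm.
  have Em : (n m).-1 = (n m).-2.+1 by lia.
  case: H => H.
  + exists m, (n m).-1; split=> //; split; first lia.
    have -> : (n m).-1.+1 = n m by lia.
    by apply/InEC; rewrite Ht.
  + exists m, (n m).-2; split=> //; split; first lia.
    by apply/InEC; rewrite -Em.
Qed.

Lemma theta_false : False.
Proof.
have [m1 [k1 [hm1 [hk1 I1]]]] := spider_s.
have [m2 [k2 [hm2 [hk2 I2]]]] := spider_t.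
have l1 := Hlen hm1. have l2 := Hlen hm2.
have F := @F1 T e lt ltirr lttr inV.
case: (eqVneq m1 m2) => [E|ne].
- subst m2.
  have out : forall j, j < 3 -> j <> m1 -> EOut e lt pos n j.
    move=> j hj jm q hq I.
    have lj := Hlen hj.
    case: (leqP 2 q) => hq2.
    + apply: (F1 ltirr lttr (SideC HH _ _) (SideC HH _ _) I I1); try lia.
      * apply/(far_diff HH) => //; try lia. split; lia.
      * apply/(far_diff HH) => //; try lia. split; lia.
      * apply/(far_diff HH) => //; try lia. split; lia.
      * apply/(far_diff HH) => //; try lia. split; lia.
    + apply: (F1 ltirr lttr (SideC HH _ _) (SideC HH _ _) I I2); try lia.
      * apply/(far_diff HH) => //; try lia. split; lia.
      * apply/(far_diff HH) => //; try lia. split; lia.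
      * apply/(far_diff HH) => //; try lia. split; lia.
      * apply/(far_diff HH) => //; try lia. split; lia.
  set j := if m1 == 0 then 1 else 0.
  set k := if m1 == 2 then 1 else 2.
  have hj : j < 3 by rewrite /j; case: ifP.
  have hk : k < 3 by rewrite /k; case: ifP.
  have jm : j <> m1 by rewrite /j; case: ifP => [/eqP->|/negbT/eqP] //; apply: nesym.
  have km : k <> m1 by rewrite /k; case: ifP => [/eqP->|/negbT/eqP] //; apply: nesym.
  have jk : j <> k.
    rewrite /j /k. clear -hm1. by case: m1 hm1 => [|[|[|?]]].
  exact: (TwoBlock HH hj hk jk (out j hj jm) (out k hk km)).
- have ne' : m2 <> m1 by apply/nesym/eqP.
  have ne'' : m1 <> m2 by apply/eqP.
  apply: (F1 ltirr lttr (SideC HH _ _) (SideC HH _ _) I1 I2); try lia.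
  + apply/(far_diff HH) => //; try lia. split; lia.
  + apply/(far_diff HH) => //; try lia. split; lia.
  + apply/(far_diff HH) => //; try lia. split; lia.
  + apply/(far_diff HH) => //; try lia. split; lia.
Qed.

End Theta4.

Section Extract.
Variable T : finType.
Variable e : rel T.
Variable phi : 'I_11 -> T.
Variable Q : 'I_11 -> 'I_11 -> seq T.
Let fe := B4_adj.
Hypothesis Hinj : injective phi.
Hypothesis Hrev : forall u v, fe u v -> Q v u = rev (Q u v).
Hypothesis Hp : forall u v, fe u v ->
         [/\ path e (phi u) (rcons (Q u v) (phi v)),
             uniq (phi u :: rcons (Q u v) (phi v)) &
             forall x w, x \in Q u v -> x != phi w].
Hypothesis Hd : forall u v u' v', fe u v -> fe u' v' -> forall x,
          x \in Q u v -> x \in Q u' v' ->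
          (u' = u /\ v' = v) \/ (u' = v /\ v' = u).

Definition seg u v := phi u :: rcons (Q u v) (phi v).

Fixpoint fp (l : seq 'I_11) : seq T :=
  match l with
  | [::] => [::]
  | w :: l' => match l' with [::] => [:: phi w] | w' :: _ => phi w :: Q w w' ++ fp l' end
  end.

Definition Good (l : seq 'I_11) := forall s, s.+1 < size l -> fe (nth ord0 l s) (nth ord0 l s.+1).

Lemma Good_tail w l : Good (w :: l) -> Good l.
Proof. by move=> G s hs; apply: (G s.+1). Qed.

Lemma fp_nth0 w l x : nth x (fp (w :: l)) 0 = phi w.
Proof. by case: l. Qed.

Lemma fp_cons2 w w' l : fp (w :: w' :: l) = phi w :: Q w w' ++ fp (w' :: l).
Proof. by []. Qed.

Lemma fp_size w l : (size l).+1 <= size (fp (w :: l)).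
Proof.
elim: l w => [|w' l IH] w //.
rewrite fp_cons2 /= -/(fp (w' :: l)) size_cat. have := IH w'. lia.
Qed.

Lemma fp_last w l x : last x (fp (w :: l)) = phi (last w l).
Proof.
elim: l w x => [|w' l IH] w x //=.
rewrite last_cat. have := IH w' x. case: l IH => [|w'' l] IH //=.
Qed.

Lemma fp_headb w l : fp (w :: l) = phi w :: behead (fp (w :: l)).
Proof. by case: l. Qed.

Lemma fp_path w l : Good (w :: l) -> path e (phi w) (behead (fp (w :: l))).
Proof.
elim: l w => [|w' l IH] w G; first by [].
have P := IH w' (Good_tail G).
have := (Hp (G 0 erefl)) => - [P1 _ _].
rewrite /= in P1.
rewrite fp_cons2.
change (path e (phi w) (Q w w' ++ fp (w' :: l))).
rewrite fp_headb -cat_rcons cat_path P1 last_rcons.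
exact: P.
Qed.

Lemma fp_mem l x : x \in fp l ->
  (exists2 w, w \in l & x = phi w) \/ (exists s, s.+1 < size l /\ x \in Q (nth ord0 l s) (nth ord0 l s.+1)).
Proof.
elim: l => [|w l IH] //.
case: l IH => [|w' l] IH.
- rewrite /= inE => /eqP ->. left; exists w => //; by rewrite inE eqxx.
- rewrite fp_cons2 inE mem_cat => /orP [/eqP ->|/orP [H|H]].
  + left; exists w => //; by rewrite inE eqxx.
  + by right; exists 0.
  + case: (IH H) => [[w0 h1 h2]|[s [h1 h2]]].
    * by left; exists w0; rewrite // inE h1 orbT.
    * by right; exists s.+1.
Qed.

Lemma fp_seg l s x : s.+1 < size l ->
  exists o, o + (size (Q (nth ord0 l s) (nth ord0 l s.+1))).+1 < size (fp l) /\
    forall r, r <= (size (Q (nth ord0 l s) (nth ord0 l s.+1))).+1 ->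
      nth x (fp l) (o + r) = nth x (seg (nth ord0 l s) (nth ord0 l s.+1)) r.
Proof.
elim: l s => [|w l IH] s //.
case: l IH => [|w' l] IH //.
case: s => [|s] hs.
- exists 0; split.
  + rewrite fp_cons2 /= -/(fp (w' :: l)) size_cat add0n.
    have := fp_size w' l. lia.
  + move=> r hr. rewrite add0n fp_cons2 /seg.
    case: r hr => [|r] hr; first by [].
    change (nth x (Q w w' ++ fp (w' :: l)) r = nth x (rcons (Q w w') (phi w')) r).
    rewrite nth_cat nth_rcons.
    case: (ltngtP r (size (Q w w'))) => h //.
    * move: hr => /= hr. lia.
    * by rewrite h subnn fp_nth0.
- have [o [ho H]] := IH s hs.
  change (nth ord0 (w' :: l) s.+1) with (nth ord0 l s) in ho.
  change (nth ord0 (w' :: l) s.+1) with (nth ord0 l s) in H.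
  exists (o + (size (Q w w')).+1); split.
  + rewrite fp_cons2 /= -/(fp (w' :: l)) size_cat. lia.
  + move=> r hr.
    change (nth ord0 (w :: w' :: l) s.+1) with (nth ord0 (w' :: l) s) in hr |- *.
    change (nth ord0 (w :: w' :: l) s.+2) with (nth ord0 l s) in hr |- *.
    rewrite -H // fp_cons2.
    have -> : o + (size (Q w w')).+1 + r = (size (Q w w') + (o + r)).+1 by lia.
    change (nth x (phi w :: Q w w' ++ fp (w' :: l)) (size (Q w w') + (o + r)).+1) with
      (nth x (Q w w' ++ fp (w' :: l)) (size (Q w w') + (o + r))).
    by rewrite nth_cat ltnNge leq_addr /= addKn.
Qed.

Lemma fp_uniq l : uniq l -> Good l -> uniq (fp l).
Proof.
elim: l => [|w l IH] //.
case: l IH => [|w' l] IH //.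
move=> U G.
have G' := Good_tail G.
have U' : uniq (w' :: l) by case/andP: U.
have wn : w \notin w' :: l by case/andP: U.
have fww := G 0 erefl. rewrite /= in fww.
have [_ U1 H3] := Hp fww.
rewrite fp_cons2 cons_uniq mem_cat negb_or.
apply/andP; split; first (apply/andP; split).
- apply/negP => hw; have := H3 _ w hw; by rewrite eqxx.
- apply/negP => /fp_mem [[w0 h1 h2]|[s [h1 h2]]].
  + have := Hinj h2 => E; subst w0. by rewrite h1 in wn.
  + have [_ _ H3'] := Hp (G' s h1). have := H3' _ w h2; by rewrite eqxx.
- rewrite cat_uniq IH // andbT.
  apply/andP; split.
  + by move: U1; rewrite /= rcons_uniq => /andP [_ /andP [_ ->]].
  + apply/hasPn => y /fp_mem [[w0 h1 h2]|[s [h1 h2]]]; apply/negP => hy.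
    * by have := H3 _ w0 hy; rewrite h2 eqxx.
    * have := Hd fww (G' s h1) hy h2.
      case=> [[E1 _]|[_ E2]].
      -- by have := mem_nth ord0 (ltnW h1); rewrite E1 (negbTE wn).
      -- by have := mem_nth ord0 h1; rewrite E2 (negbTE wn).
Qed.

Notation "'#' k" := (@Ordinal 11 k erefl) (at level 0, k at level 0).
Definition br (m : nat) : seq 'I_11 :=
  match m with 0 => [:: #0; #2; #3; #4; #1] | 1 => [:: #0; #5; #6; #7; #1]
  | _ => [:: #0; #8; #9; #10; #1] end.

Lemma br_good m : m < 3 -> Good (br m).
Proof.
by case: m => [|[|[|m]]] // _ s; case: s => [|[|[|[|s]]]].
Qed.

Lemma br_uniq m : m < 3 -> uniq (br m).
Proof. by case: m => [|[|[|m]]]. Qed.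

Lemma br_size m : size (br m) = 5.
Proof. by case: m => [|[|[|m]]]. Qed.

Lemma br_inter m m' w : m < 3 -> m' < 3 -> m <> m' -> w \in br m -> w \in br m' ->
  w = #0 \/ w = #1.
Proof.
move=> hm hm' mm' h1 h2.
have : (w == #0) || (w == #1).
{ move: h1 h2.
  case: w => k hk.
  case: m hm mm' => [|[|[|m]]] // _; case: m' hm' => [|[|[|m']]] // _ mm'.
  all: try by case: mm'.
  all: do 11 (case: k hk => [|k] hk; first by []); by []. }
by case/orP=> /eqP ->; [left|right].
Qed.

Lemma br_pairs m m' s s' : m < 3 -> m' < 3 -> m <> m' -> s < 4 -> s' < 4 ->
  ~ ((nth ord0 (br m') s' = nth ord0 (br m) s /\ nth ord0 (br m') s'.+1 = nth ord0 (br m) s.+1) \/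
     (nth ord0 (br m') s' = nth ord0 (br m) s.+1 /\ nth ord0 (br m') s'.+1 = nth ord0 (br m) s)).
Proof.
move=> hm hm' mm' hs hs'.
have : ~~ (((nth ord0 (br m') s' == nth ord0 (br m) s) && (nth ord0 (br m') s'.+1 == nth ord0 (br m) s.+1)) ||
     ((nth ord0 (br m') s' == nth ord0 (br m) s.+1) && (nth ord0 (br m') s'.+1 == nth ord0 (br m) s))).
{ case: m hm mm' => [|[|[|m]]] // _; case: m' hm' => [|[|[|m']]] // _ mm'.
  all: try by case: mm'.
  all: case: s hs => [|[|[|[|s]]]] // _; case: s' hs' => [|[|[|[|s']]]] // _. }
move=> H [[E1 E2]|[E1 E2]]; move/negP: H; apply; by rewrite E1 E2 !eqxx ?orbT.
Qed.

Ltac ew m s := exists m, s; split; [done|split; [done| first [left; split; apply: val_inj; done | right; split; apply: val_inj; done]]].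
Ltac edge_wit := first [ solve [ew 0 0] | solve [ew 0 1] | solve [ew 0 2] | solve [ew 0 3] | solve [ew 1 0] | solve [ew 1 1] | solve [ew 1 2] | solve [ew 1 3] | solve [ew 2 0] | solve [ew 2 1] | solve [ew 2 2] | solve [ew 2 3] ].

Lemma edge_class u v : fe u v -> exists m s, m < 3 /\ s < 4 /\
  ((u = nth ord0 (br m) s /\ v = nth ord0 (br m) s.+1) \/
   (v = nth ord0 (br m) s /\ u = nth ord0 (br m) s.+1)).
Proof.
rewrite /fe.
case: u => k hk; case: v => k' hk' H.
do 11 (case: k hk H => [|k] hk H; [do 11 (case: k' hk' H => [|k'] hk' H; [first [by [] | edge_wit] | ]); by [] | ]).
by [].
Qed.

Hypothesis Hi : forall x y, in_subdiv fe phi Q x -> in_subdiv fe phi Q y -> e x y ->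
          exists u v, fe u v /\ consec (phi u :: rcons (Q u v) (phi v)) x y.

Definition FP m := fp (br m).
Definition pos m k := nth (phi ord0) (FP m) k.
Definition nn m := (size (FP m)).-1.

Lemma br_cons m : m < 3 -> br m = #0 :: behead (br m).
Proof. by case: m => [|[|[|m]]]. Qed.

Lemma br_last m : m < 3 -> last #0 (behead (br m)) = #1.
Proof. by case: m => [|[|[|m]]]. Qed.

Lemma FP_size m : m < 3 -> 5 <= size (FP m).
Proof.
move=> hm; rewrite /FP (br_cons hm).
have := fp_size #0 (behead (br m)). by rewrite size_behead br_size.
Qed.

Lemma nn_ge m : m < 3 -> 4 <= nn m.
Proof. move=> hm; have := FP_size hm; rewrite /nn; lia. Qed.

Lemma pos0 m : m < 3 -> pos m 0 = phi #0.
Proof. by move=> hm; rewrite /pos /FP (br_cons hm) fp_nth0. Qed.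

Lemma posn m : m < 3 -> pos m (nn m) = phi #1.
Proof.
move=> hm; rewrite /pos /nn nth_last /FP (br_cons hm) fp_last.
by rewrite br_last.
Qed.

Lemma pos_path m k : m < 3 -> k < nn m -> e (pos m k) (pos m k.+1).
Proof.
move=> hm hk.
have G : Good (#0 :: behead (br m)) by rewrite -br_cons //; exact: br_good.
have P := fp_path G.
move/(pathP (phi ord0)): P => P.
have hk' : k < size (behead (fp (#0 :: behead (br m)))).
  by rewrite size_behead -(br_cons hm).
have := P k hk'. rewrite -fp_headb nth_behead.
by rewrite /pos /FP (br_cons hm).
Qed.

Lemma FP_uniq m : m < 3 -> uniq (FP m).
Proof. move=> hm; apply: fp_uniq; [exact: br_uniq | exact: br_good]. Qed.

Lemma cross m m' x : m < 3 -> m' < 3 -> m <> m' -> x \in FP m -> x \in FP m' ->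
  x = phi #0 \/ x = phi #1.
Proof.
move=> hm hm' mm' /fp_mem h1 /fp_mem h2.
case: h1 => [[w hw Ew]|[s [hs hx]]]; case: h2 => [[w' hw' Ew']|[s' [hs' hx']]].
- subst x. have E := Hinj Ew'. subst w'.
  by case: (br_inter hm hm' mm' hw hw') => ->; [left|right].
- exfalso. have [_ _ H3] := Hp (br_good hm' hs'). have := H3 _ w hx'. by rewrite Ew eqxx.
- exfalso. have [_ _ H3] := Hp (br_good hm hs). have := H3 _ w' hx. by rewrite Ew' eqxx.
- exfalso. have := Hd (br_good hm hs) (br_good hm' hs') hx hx'.
  apply: (br_pairs hm hm' mm'); move: hs hs'; rewrite !br_size; lia.
Qed.

Lemma pos_mem m k : k <= nn m -> m < 3 -> pos m k \in FP m.
Proof. move=> hk hm; apply: mem_nth. have := FP_size hm. move: hk; rewrite /nn. move: (size (FP m)) => z. lia. Qed.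

Lemma pos_inj m m' k k' : m < 3 -> m' < 3 -> k <= nn m -> k' <= nn m' ->
  pos m k = pos m' k' -> (m = m' /\ k = k') \/ (k = 0 /\ k' = 0) \/ (k = nn m /\ k' = nn m').
Proof.
move=> hm hm' hk hk' E.
have s1 := FP_size hm. have s2 := FP_size hm'.
have U : forall i j j', i < 3 -> j <= nn i -> j' <= nn i -> pos i j = pos i j' -> j = j'.
{ move=> i j j' hi hj hj' E'. have s3 := FP_size hi.
  have hj1 : j < size (FP i) by move: hj s3; rewrite /nn; move: (size (FP i)) => z; lia.
  have hj1' : j' < size (FP i) by move: hj' s3; rewrite /nn; move: (size (FP i)) => z; lia.
  apply/eqP; rewrite -(nth_uniq (phi ord0) hj1 hj1' (FP_uniq hi)); exact/eqP. }
have n1 := nn_ge hm. have n2 := nn_ge hm'.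
case: (eqVneq m m') => [Em|ne].
- subst m'; left; split=> //; exact: U E.
- right.
  have := cross hm hm' (elimN eqP ne) (pos_mem hk hm) (eq_ind_r (fun z => z \in FP m') (pos_mem hk' hm') E).
  case=> E0.
  + left; split.
    * apply: (U m) => //. by rewrite E0 pos0.
    * apply: (U m') => //. by rewrite -E E0 pos0.
  + right; split.
    * apply: (U m) => //. by rewrite E0 posn.
    * apply: (U m') => //. by rewrite -E E0 posn.
Qed.

Lemma pos_sub m k : m < 3 -> k <= nn m -> in_subdiv fe phi Q (pos m k).
Proof.
move=> hm hk; case/fp_mem: (pos_mem hk hm) => [[w _ Ew]|[s [hs hx]]].
- by left; exists w.
- right; exists (nth ord0 (br m) s), (nth ord0 (br m) s.+1); split=> //.
  exact: br_good.
Qed.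

Lemma seg_rev u v : fe u v -> seg v u = rev (seg u v).
Proof.
by move=> h; rewrite /seg (Hrev h) rev_cons rev_rcons.
Qed.

Lemma pos_ind m m' k k' : m < 3 -> m' < 3 -> k <= nn m -> k' <= nn m' ->
  e (pos m k) (pos m' k') -> exists i j, i < 3 /\ j < nn i /\
   ((pos m k = pos i j /\ pos m' k' = pos i j.+1) \/ (pos m k = pos i j.+1 /\ pos m' k' = pos i j)).
Proof.
move=> hm hm' hk hk' E.
have [u [v [fuv [i [hi [Ex Ey]]]]]] := Hi (pos_sub hm hk) (pos_sub hm' hk') E.
move: hi Ex Ey; set x := pos m k; set y := pos m' k' => hi Ex Ey.
have [m0 [s [hm0 [hs C]]]] := edge_class fuv.
have hs' : s.+1 < size (br m0) by rewrite br_size; lia.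
have [o [ho H]] := fp_seg (phi ord0) hs'.
have G := br_good hm0 hs'.
have Hn : forall r, r <= (size (Q (nth ord0 (br m0) s) (nth ord0 (br m0) s.+1))).+1 ->
   nth (phi ord0) (seg (nth ord0 (br m0) s) (nth ord0 (br m0) s.+1)) r = pos m0 (o + r).
  by move=> r hr; rewrite -H.
have hnn : o + (size (Q (nth ord0 (br m0) s) (nth ord0 (br m0) s.+1))).+1 <= nn m0.
  move: ho; rewrite /nn /FP; move: (size (fp (br m0))) => z; lia.
move: ho H Hn hnn G C.
move: (nth ord0 (br m0) s) (nth ord0 (br m0) s.+1) => u0 v0 ho H Hn hnn G C.
exists m0.
have szS : size (seg u0 v0) = (size (Q u0 v0)).+2 by rewrite /seg /= size_rcons.
case: C => [[Eu Ev]|[Ev Eu]]; subst u v.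
- rewrite /= size_rcons in hi.
  exists (o + i); split=> //; split.
    move: hi hnn; move: (size (Q u0 v0)) => z; lia.
  left; split.
  + rewrite -Ex (set_nth_default (phi ord0)); last by rewrite -/(seg u0 v0) szS; lia.
    by rewrite -/(seg u0 v0) Hn //; lia.
  + rewrite -Ey (set_nth_default (phi ord0)); last by rewrite -/(seg u0 v0) szS; lia.
    by rewrite -/(seg u0 v0) Hn ?addnS //; lia.
- have Sr := seg_rev G.
  rewrite -/(seg v0 u0) Sr in hi Ex Ey.
  rewrite size_rev szS in hi.
  exists (o + (size (Q u0 v0) - i)); split=> //; split.
    move: hi hnn; move: (size (Q u0 v0)) => z; lia.
  right; split.
  + rewrite -Ex (set_nth_default (phi ord0)); last by rewrite size_rev szS; lia.
    rewrite nth_rev szS; last lia.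
    rewrite Hn; last lia.
    congr pos; lia.
  + rewrite -Ey (set_nth_default (phi ord0)); last by rewrite size_rev szS; lia.
    rewrite nth_rev szS; last lia.
    rewrite Hn; last lia.
    congr pos; lia.
Qed.

End Extract.

Unset Implicit Arguments.

Theorem proposition6p2 (T : finType) (e : rel T) (lt : rel T) :
  simple_graph e -> strict_linear_order lt -> X_free e lt ->
  ~ induced_subdivision B4_adj e.
Proof.
move=> [esym eirr] [ltirr lttr lttot] Xf [phi [Q [Hinj Hrev Hp Hd Hi]]].
apply: (@theta_false T e lt (pos phi Q) (nn phi Q)).
apply: Build_ThetaH.
- exact: esym.
- exact: eirr.
- exact: ltirr.
- exact: lttr.
- exact: lttot.
- exact: Xf.
- by move=> m hm; rewrite !pos0.
- by move=> m hm; rewrite !posn.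
- move=> m k hm hk; exact: (pos_path Hp hm hk).
- move=> m m' k k' hm hm' hk hk' E; exact: (pos_inj Hinj Hp Hd hm hm' hk hk' E).
- move=> m m' k k' hm hm' hk hk' E; exact: (pos_ind Hrev Hi hm hm' hk hk' E).
- move=> m hm; exact: nn_ge.
Qed.
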